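(* For every integer $n\ge 13$, $$\lambda_{\min}\big(\mathcal U(n-5,3)^c\big)<\lambda_{\min}\big(\mathcal U'(n-4)^c\big).$$
   Context: All graphs are simple and finite. For a graph $G$, $\lambda_{\min}(G)$ denotes the least eigenvalue of the adjacency matrix $A(G)$, and $G^c$ denotes the complement of $G$. $K_{1,m}$ is the star with $m$ edges; its vertex of degree $m$ is the center and the others are pendant vertices. $S_m^3$ denotes the graph of order $m$ obtained from $K_{1,m-1}$ by adding one edge between two of its pendant vertices. For integers $p\ge 1$, $q\ge 3$, $\mathcal U(p,q)$ is the graph of order $p+q+2$ obtained from disjoint copies of $K_{1,p}$ and $S_{q+1}^3$ by adding one edge joining a pendant vertex of $K_{1,p}$ to a pendant (degree-one) vertex of $S_{q+1}^3$. For an integer $p\ge 1$, $\mathcal U'(p)$ is the graph of order $p+4$ obtained from disjoint copies of $K_{1,p}$ and the triangle $C_3$ by adding one edge joining a pendant vertex of $K_{1,p}$ to a vertex of $C_3$. *)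

(* Defs.v *)
From HB Require Import structures.
From mathcomp Require Import all_boot all_order all_algebra.
Set Implicit Arguments. Unset Strict Implicit. Unset Printing Implicit Defensive.
Import Order.TTheory GRing.Theory Num.Theory.
Local Open Scope ring_scope.

Definition adjmx (R : nzRingType) (m : nat) (e : rel 'I_m) : 'M[R]_m :=
  \matrix_(i, j) ((e i j)%:R : R).

Definition compl (m : nat) (e : rel 'I_m) : rel 'I_m :=
  fun i j => (i != j) && ~~ e i j.

Definition is_lambda_min (R : rcfType) (m : nat) (A : 'M[R]_m) (l : R) : Prop :=
  eigenvalue A l /\ (forall b, eigenvalue A b -> l <= b).

(* U(p,q), vertices 0..p+q+1:
   K_{1,p}: center 0, pendants 1..p;
   S^3_{q+1}: center p+1, pendants p+2..p+q+1, extra edge {p+2,p+3};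
   joining edge {1, p+q+1} (p+q+1 has degree one in S^3_{q+1} as q >= 3). *)
Definition U_edge0 (p q : nat) (i j : nat) : bool :=
  [|| (i == 0)%N && (1 <= j <= p)%N,
      (i == p.+1)%N && (p.+2 <= j <= p + q + 1)%N,
      (i == p.+2)%N && (j == p.+3)%N
    | (i == 1)%N && (j == p + q + 1)%N].

Definition U_graph (p q : nat) : rel 'I_(p + q + 2) :=
  fun i j => U_edge0 p q i j || U_edge0 p q j i.

(* U'(p), vertices 0..p+3:
   K_{1,p}: center 0, pendants 1..p; triangle on p+1,p+2,p+3;
   joining edge {1, p+1}. *)
Definition U'_edge0 (p : nat) (i j : nat) : bool :=
  [|| (i == 0)%N && (1 <= j <= p)%N,
      (i == p.+1)%N && (j == p.+2)%N,
      (i == p.+1)%N && (j == p.+3)%N,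
      (i == p.+2)%N && (j == p.+3)%N
    | (i == 1)%N && (j == p.+1)%N].

Definition U'_graph (p : nat) : rel 'I_(p + 4) :=
  fun i j => U'_edge0 p i j || U'_edge0 p j i.

Arguments U_graph : clear implicits.
Arguments U'_graph : clear implicits.

(* Main.v *)
Require Import Defs.
From HB Require Import structures.
From mathcomp Require Import all_boot all_order all_algebra.
From mathcomp Require Import zify ring lra.
From Stdlib Require Import Classical_Prop.
Set Implicit Arguments. Unset Strict Implicit. Unset Printing Implicit Defensive.
Import Order.TTheory GRing.Theory Num.Theory.
Local Open Scope ring_scope.

Section Gen.
Variable R : rcfType.

Definition vat N (v : 'rV[R]_N) (a : nat) : R :=
  if (insub a : option 'I_N) is Some o then v 0 o else 0.

Lemma vatE N (v : 'rV[R]_N) (i : 'I_N) : vat v i = v 0 i.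
Proof. by rewrite /vat valK. Qed.

Lemma sum_ind1 N (f : nat -> R) a : (a < N)%N ->
  \sum_(0 <= i < N) f i * (i == a)%:R = f a.
Proof.
move=> ha.
rewrite (eq_bigr (fun i => if i == a then f i else 0)); last first.
  by move=> i _; case: eqP => _; rewrite ?mulr1 ?mulr0.
by rewrite -big_mkcond big_nat1_eq ha.
Qed.

Lemma ind_or (x y : bool) : ~~ (x && y) -> (x || y)%:R = x%:R + y%:R :> R.
Proof. by case: x; case: y => //= _; rewrite ?add0r ?addr0. Qed.

Lemma base N (g : nat -> nat -> bool) (G : rel 'I_N)
  (hG : forall i j : 'I_N, G i j = g i j) (hirr : forall i, g i i = false)
  (v : 'rV[R]_N) (f : nat -> R) (hv : forall i : 'I_N, v 0 i = f i) (j : 'I_N) :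
  (v *m adjmx R (compl G)) 0 j =
  \sum_(0 <= i < N) f i - f j - \sum_(0 <= i < N) f i * (g i j)%:R.
Proof.
rewrite mxE.
transitivity (\sum_(0 <= i < N) f i * ((i != val j) && ~~ g i j)%:R).
  rewrite big_mkord; apply: eq_bigr => i _.
  by rewrite /adjmx mxE /compl hG hv.
have -> : \sum_(0 <= i < N) f i = \sum_(0 <= i < N) f i * 1.
  by apply: eq_bigr => i _; rewrite mulr1.
rewrite -(sum_ind1 f (ltn_ord j)) -!sumrB.
apply: eq_bigr => i _.
rewrite -!mulrBr; congr (_ * _).
case: (eqVneq i (val j)) => [e|ne].
  by rewrite e hirr /= subrr subr0.
by case: (g i j) => /=; rewrite ?subr0 ?subrr.
Qed.

Lemma least_root_aux n : forall p : {poly R}, (size p <= n)%N -> p != 0 ->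
  forall a, root p a -> exists2 l, root p l & forall b, root p b -> l <= b.
Proof.
elim: n => [|n IH] p hs hp a ha.
  by move: hs; rewrite leqn0 size_poly_eq0 (negbTE hp).
case/factor_theorem: ha => q hq.
have hq0 : q != 0.
  by apply/eqP => e; move/eqP: hp; apply; rewrite hq e mul0r.
have hsq : (size q <= n)%N.
  move: hs; rewrite hq size_mul ?polyXsubC_eq0 // size_XsubC addn2 /=.
  by [].
have hr : forall b, root p b = root q b || (b == a).
  by move=> b; rewrite hq rootM root_XsubC.
case: (Classical_Prop.classic (exists b, root q b)) => [[b hb]|nb].
  have [l' hl' hmin] := IH q hsq hq0 b hb.
  exists (Num.min a l').
    by rewrite hr; case: leP => _; rewrite ?hl' ?eqxx ?orbT.
  move=> c; rewrite hr => /orP [/hmin hc| /eqP ->].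
    by rewrite ge_min hc orbT.
  by rewrite ge_min lexx.
exists a; first by rewrite hr eqxx orbT.
move=> c; rewrite hr => /orP [hc|/eqP -> //].
by exfalso; apply: nb; exists c.
Qed.

Lemma least_eig m (A : 'M[R]_m) a : eigenvalue A a ->
  exists l, is_lambda_min A l.
Proof.
rewrite eigenvalue_root_char => ha.
have hp : char_poly A != 0 by apply: monic_neq0; apply: char_poly_monic.
have [l hl hmin] := least_root_aux (leqnn _) hp ha.
exists l; split; first by rewrite eigenvalue_root_char.
by move=> b; rewrite eigenvalue_root_char; apply: hmin.
Qed.


Lemma sum_rng N (f : nat -> R) a b : (a <= b)%N -> (b <= N)%N ->
  \sum_(0 <= i < N) f i * (((a <= i) && (i < b))%N)%:R = \sum_(a <= i < b) f i.
Proof.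
move=> hab hbN.
rewrite (@big_cat_nat _ _ _ a) //= ?(leq_trans hab hbN) //.
rewrite (@big_cat_nat _ _ _ b a N) //=.
rewrite (@eq_big_nat _ _ _ 0 a _ (fun _ => 0)); last first.
  by move=> i hi; rewrite (_ : ((a <= i) && (i < b))%N = false) ?mulr0 //; lia.
rewrite (@eq_big_nat _ _ _ b N _ (fun _ => 0)); last first.
  by move=> i hi; rewrite (_ : ((a <= i) && (i < b))%N = false) ?mulr0 //; lia.
rewrite !big1_eq add0r addr0.
apply: eq_big_nat => i hi; rewrite (_ : ((a <= i) && (i < b))%N = true) ?mulr1 //; lia.
Qed.

Lemma nb1 N (f : nat -> R) (g : nat -> bool) a : (a < N)%N ->
  (forall i, g i = (i == a)) -> \sum_(0 <= i < N) f i * (g i)%:R = f a.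
Proof.
move=> ha hg; rewrite -(sum_ind1 f ha); apply: eq_bigr => i _; by rewrite hg.
Qed.

Lemma nb2 N (f : nat -> R) (g : nat -> bool) a b : (a < N)%N -> (b < N)%N ->
  a != b -> (forall i, g i = (i == a) || (i == b)) ->
  \sum_(0 <= i < N) f i * (g i)%:R = f a + f b.
Proof.
move=> ha hb hab hg; rewrite -(sum_ind1 f ha) -(sum_ind1 f hb) -big_split.
apply: eq_bigr => i _; rewrite hg ind_or ?mulrDr //.
by apply/negP => /andP [/eqP -> /eqP e]; rewrite e eqxx in hab.
Qed.

Lemma nb3 N (f : nat -> R) (g : nat -> bool) a b c : (a < N)%N -> (b < N)%N ->
  (c < N)%N -> a != b -> a != c -> b != c ->
  (forall i, g i = [|| i == a, i == b | i == c]) ->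
  \sum_(0 <= i < N) f i * (g i)%:R = f a + f b + f c.
Proof.
move=> ha hb hc hab hac hbc hg.
rewrite -(sum_ind1 f ha) -(sum_ind1 f hb) -(sum_ind1 f hc) -!big_split.
apply: eq_bigr => i _; rewrite hg ind_or; last first.
  by apply/negP => /andP [/eqP -> /orP [/eqP e|/eqP e]];
    [rewrite e eqxx in hab|rewrite e eqxx in hac].
rewrite ind_or ?mulrDr ?addrA //.
by apply/negP => /andP [/eqP -> /eqP e]; rewrite e eqxx in hbc.
Qed.

Lemma sum_const_cls (f : nat -> R) a b w : (a <= b)%N ->
  (forall i, (a <= i < b)%N -> f i = w) ->
  \sum_(a <= i < b) f i = (b - a)%:R * w.
Proof.
move=> hab hf; rewrite (eq_big_nat _ _ hf) sumr_const_nat.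
by rewrite mulr_natl.
Qed.

Lemma eig_nat N (g : nat -> nat -> bool) (G : rel 'I_N)
  (hG : forall i j : 'I_N, G i j = g i j) (hirr : forall i, g i i = false)
  (v : 'rV[R]_N) b : v *m adjmx R (compl G) = b *: v ->
  forall j, (j < N)%N ->
  \sum_(0 <= i < N) vat v i - vat v j - \sum_(0 <= i < N) vat v i * (g i j)%:R
   = b * vat v j.
Proof.
move=> Hv j hj.
have hv : forall i : 'I_N, v 0 i = vat v i by move=> i; rewrite vatE.
have := base hG hirr hv (Ordinal hj).
by rewrite Hv mxE -vatE /= => <-.
Qed.

End Gen.

Section Polys.
Variable R : rcfType.
Definition A0 (b k : R) : R := (- 2 - 2*k^+1 - 2*b^+1 - 3*b^+1*k^+1 + 5*b^+2 + 5*b^+2*k^+1 + 5*b^+3 + 5*b^+3*k^+1 - b^+4 + b^+4*k^+1 - b^+5).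
Definition A1 (b k : R) : R := (2 - 2*b^+1*k^+1 - 5*b^+2 - b^+2*k^+1 - 3*b^+3).
Definition A2 (b k : R) : R := (2 + 3*b^+1 - 7*b^+2 - 4*b^+3).
Definition A3 (b k : R) : R := (- 2 - 2*k^+1 - 3*b^+1*k^+1 + 2*b^+2 + b^+2*k^+1 - b^+3 + b^+3*k^+1 - b^+4).
Definition A4 (b k : R) : R := (1 + b^+1 - b^+2 + 2*b^+2*k^+1 - 2*b^+3 + b^+3*k^+1 - b^+4).
Definition A5 (b k : R) : R := (3*b^+1 + 2*b^+1*k^+1 + b^+2 + 3*b^+2*k^+1 - 3*b^+3 + b^+3*k^+1 - b^+4).
Definition q1 (b k : R) : R := (- 2*k^+1 + 7*b^+1 + b^+1*k^+1 + 3*b^+2 + 11*b^+2*k^+1 - 13*b^+3 - b^+3*k^+1 - 9*b^+4 - 5*b^+4*k^+1 + b^+5 - b^+5*k^+1 + b^+6).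
Definition q2 (b k : R) : R := (- 2 + 2*k^+1 - 2*b^+1 - 5*b^+1*k^+1 + 5*b^+2 - b^+2*k^+1 + 5*b^+3 + 4*b^+3*k^+1 - b^+4 + b^+4*k^+1 - b^+5).
Definition Q1poly (k : R) : {poly R} := (- 2*k%:P + 7*'X^1 + 'X^1*k%:P + 3*'X^2 + 11*'X^2*k%:P - 13*'X^3 - 'X^3*k%:P - 9*'X^4 - 5*'X^4*k%:P + 'X^5 - 'X^5*k%:P + 'X^6).
Lemma Q1polyE k x : (Q1poly k).[x] = q1 x k.
Proof. by rewrite /Q1poly /q1 !hornerE /=; ring. Qed.
End Polys.

Section G2.
Variable R : rcfType.
Variable p : nat.
Hypothesis hp : (3 <= p)%N.

Definition g2 (i j : nat) := U'_edge0 p i j || U'_edge0 p j i.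
Lemma hG2 : forall i j : 'I_(p + 4), U'_graph p i j = g2 i j.
Proof. by []. Qed.
Lemma irr2 i : g2 i i = false.
Proof. rewrite /g2 /U'_edge0; lia. Qed.

Lemma S2 (f : nat -> R) : \sum_(0 <= i < p + 4) f i =
  f 0%N + f 1%N + \sum_(2 <= i < p.+1) f i + f p.+1 + f p.+2 + f p.+3.
Proof.
rewrite (big_cat_nat (n := 2)) //; last lia.
rewrite (big_cat_nat (n := p.+1) (m := 2)) //; try lia.
rewrite [\sum_(0 <= i < 2) _]big_ltn // [\sum_(1 <= i < 2) _]big_ltn // big_geq //.
rewrite [\sum_(p.+1 <= i < p + 4) _]big_ltn; last lia.
rewrite [\sum_(p.+2 <= i < p + 4) _]big_ltn; last lia.
rewrite [\sum_(p.+3 <= i < p + 4) _]big_ltn; last lia.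
rewrite [\sum_(p.+4 <= i < p + 4) _]big_geq; last lia.
rewrite /=; ring.
Qed.


Lemma alg2 (b k X0 X1 Xw Xt Xu : R) :
  (- b^+1) * X0 + 0 * X1 + 0 * Xw + (1) * Xt + (2) * Xu = 0 ->
  0 * X0 + (- b^+1) * X1 + (k^+1) * Xw + 0 * Xt + (2) * Xu = 0 ->
  0 * X0 + (1) * X1 + (- 1 + k^+1 - b^+1) * Xw + (1) * Xt + (2) * Xu = 0 ->
  (1) * X0 + 0 * X1 + (k^+1) * Xw + (- b^+1) * Xt + 0 * Xu = 0 ->
  (1) * X0 + (1) * X1 + (k^+1) * Xw + 0 * Xt + (- b^+1) * Xu = 0 ->
  q2 b k != 0 -> [/\ X0 = 0, X1 = 0, Xw = 0, Xt = 0 & Xu = 0].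
Proof.
move=> e0 e1 e2 e3 e4 hq.
have dX0 : q2 b k * X0 = (2*k^+1 - 2*b^+1 - 2*b^+1*k^+1 - 2*b^+2 - 4*b^+2*k^+1 + b^+3 - b^+3*k^+1 + b^+4) * ((- b^+1) * X0 + 0 * X1 + 0 * Xw + (1) * Xt + (2) * Xu) + (2*b^+1 + b^+1*k^+1 + 2*b^+2) * (0 * X0 + (- b^+1) * X1 + (k^+1) * Xw + 0 * Xt + (2) * Xu) + (- 2*k^+1 + 2*b^+1*k^+1 + 3*b^+2*k^+1) * (0 * X0 + (1) * X1 + (- 1 + k^+1 - b^+1) * Xw + (1) * Xt + (2) * Xu) + (- 2 - 2*b^+1 - b^+1*k^+1 + b^+2 - b^+2*k^+1 + b^+3) * ((1) * X0 + 0 * X1 + (k^+1) * Xw + (- b^+1) * Xt + 0 * Xu) + (2*k^+1 - 2*b^+1*k^+1 + 2*b^+2 - 2*b^+2*k^+1 + 2*b^+3) * ((1) * X0 + (1) * X1 + (k^+1) * Xw + 0 * Xt + (- b^+1) * Xu).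
  by rewrite /q2; ring.
rewrite e0 e1 e2 e3 e4 !mulr0 !addr0 in dX0.
have zX0 : X0 = 0 by apply/eqP; move/eqP: dX0; rewrite mulf_eq0 (negbTE hq).
have dX1 : q2 b k * X1 = (2*b^+1 + b^+1*k^+1 + 2*b^+2) * ((- b^+1) * X0 + 0 * X1 + 0 * Xw + (1) * Xt + (2) * Xu) + (- 3*b^+1 + 3*b^+1*k^+1 - 3*b^+2 - 3*b^+2*k^+1 + b^+3 - b^+3*k^+1 + b^+4) * (0 * X0 + (- b^+1) * X1 + (k^+1) * Xw + 0 * Xt + (2) * Xu) + (- 3*b^+1*k^+1 + 2*b^+2*k^+1 + b^+3*k^+1) * (0 * X0 + (1) * X1 + (- 1 + k^+1 - b^+1) * Xw + (1) * Xt + (2) * Xu) + (2 - 2*k^+1 + 2*b^+1 + 2*b^+1*k^+1 + b^+2*k^+1) * ((1) * X0 + 0 * X1 + (k^+1) * Xw + (- b^+1) * Xt + 0 * Xu) + (- 2 + 2*k^+1 - 2*b^+1 - 2*b^+1*k^+1 + 2*b^+2 + 2*b^+3) * ((1) * X0 + (1) * X1 + (k^+1) * Xw + 0 * Xt + (- b^+1) * Xu).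
  by rewrite /q2; ring.
rewrite e0 e1 e2 e3 e4 !mulr0 !addr0 in dX1.
have zX1 : X1 = 0 by apply/eqP; move/eqP: dX1; rewrite mulf_eq0 (negbTE hq).
have dXw : q2 b k * Xw = (- 2 + 2*b^+1 + 3*b^+2) * ((- b^+1) * X0 + 0 * X1 + 0 * Xw + (1) * Xt + (2) * Xu) + (- 3*b^+1 + 2*b^+2 + b^+3) * (0 * X0 + (- b^+1) * X1 + (k^+1) * Xw + 0 * Xt + (2) * Xu) + (2 - 5*b^+2 + b^+4) * (0 * X0 + (1) * X1 + (- 1 + k^+1 - b^+1) * Xw + (1) * Xt + (2) * Xu) + (2 - 2*b^+1 + b^+3) * ((1) * X0 + 0 * X1 + (k^+1) * Xw + (- b^+1) * Xt + 0 * Xu) + (- 2 + 2*b^+2 + 2*b^+3) * ((1) * X0 + (1) * X1 + (k^+1) * Xw + 0 * Xt + (- b^+1) * Xu).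
  by rewrite /q2; ring.
rewrite e0 e1 e2 e3 e4 !mulr0 !addr0 in dXw.
have zXw : Xw = 0 by apply/eqP; move/eqP: dXw; rewrite mulf_eq0 (negbTE hq).
have dXt : q2 b k * Xt = (- 2 - 2*b^+1 - b^+1*k^+1 + b^+2 - b^+2*k^+1 + b^+3) * ((- b^+1) * X0 + 0 * X1 + 0 * Xw + (1) * Xt + (2) * Xu) + (2 - 2*k^+1 + 2*b^+1 + 2*b^+1*k^+1 + b^+2*k^+1) * (0 * X0 + (- b^+1) * X1 + (k^+1) * Xw + 0 * Xt + (2) * Xu) + (2*k^+1 - 2*b^+1*k^+1 + b^+3*k^+1) * (0 * X0 + (1) * X1 + (- 1 + k^+1 - b^+1) * Xw + (1) * Xt + (2) * Xu) + (2*k^+1 - 4*b^+1 - 4*b^+2 - 3*b^+2*k^+1 + b^+3 - b^+3*k^+1 + b^+4) * ((1) * X0 + 0 * X1 + (k^+1) * Xw + (- b^+1) * Xt + 0 * Xu) + (- 2*k^+1 + 2*b^+1 + 2*b^+2 + 2*b^+2*k^+1) * ((1) * X0 + (1) * X1 + (k^+1) * Xw + 0 * Xt + (- b^+1) * Xu).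
  by rewrite /q2; ring.
rewrite e0 e1 e2 e3 e4 !mulr0 !addr0 in dXt.
have zXt : Xt = 0 by apply/eqP; move/eqP: dXt; rewrite mulf_eq0 (negbTE hq).
have dXu : q2 b k * Xu = (k^+1 - b^+1*k^+1 + b^+2 - b^+2*k^+1 + b^+3) * ((- b^+1) * X0 + 0 * X1 + 0 * Xw + (1) * Xt + (2) * Xu) + (- 1 + k^+1 - b^+1 - b^+1*k^+1 + b^+2 + b^+3) * (0 * X0 + (- b^+1) * X1 + (k^+1) * Xw + 0 * Xt + (2) * Xu) + (- k^+1 + b^+2*k^+1 + b^+3*k^+1) * (0 * X0 + (1) * X1 + (- 1 + k^+1 - b^+1) * Xw + (1) * Xt + (2) * Xu) + (- k^+1 + b^+1 + b^+2 + b^+2*k^+1) * ((1) * X0 + 0 * X1 + (k^+1) * Xw + (- b^+1) * Xt + 0 * Xu) + (k^+1 - b^+1 + b^+1*k^+1 - b^+2 - 2*b^+2*k^+1 + b^+3 - b^+3*k^+1 + b^+4) * ((1) * X0 + (1) * X1 + (k^+1) * Xw + 0 * Xt + (- b^+1) * Xu).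
  by rewrite /q2; ring.
rewrite e0 e1 e2 e3 e4 !mulr0 !addr0 in dXu.
have zXu : Xu = 0 by apply/eqP; move/eqP: dXu; rewrite mulf_eq0 (negbTE hq).
by split.
Qed.

Lemma nb20 i : g2 i 0 = ((1 <= i) && (i < p.+1))%N.
Proof. rewrite /g2 /U'_edge0; lia. Qed.
Lemma nb21 i : g2 i 1 = (i == 0%N) || (i == p.+1).
Proof. rewrite /g2 /U'_edge0; lia. Qed.
Lemma nb2w j i : (2 <= j <= p)%N -> g2 i j = (i == 0%N).
Proof.
move=> /andP [h2 hp'].
have n0 : (j == 0%N) = false by apply/negbTE; rewrite -lt0n (leq_trans _ h2).
have n1 : (j == 1%N) = false by apply/negbTE; rewrite neq_ltn h2 orbT.
have n2 : (j == p.+1) = false by apply/negbTE; rewrite neq_ltn ltnS hp'.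
have n3 : (j == p.+2) = false by apply/negbTE; rewrite neq_ltn ltnS (leqW hp').
have n4 : (j == p.+3) = false by apply/negbTE; rewrite neq_ltn ltnS (leqW (leqW hp')).
have n5 : (1 <= j <= p)%N by rewrite hp' (leq_trans _ h2).
rewrite /g2 /U'_edge0 n0 n1 n2 n3 n4 n5 /=.
by rewrite !andbF !orbF andbT.
Qed.
Lemma nb2t i : g2 i p.+1 = [|| i == 1%N, i == p.+2 | i == p.+3].
Proof. rewrite /g2 /U'_edge0; lia. Qed.
Lemma nb2u1 i : g2 i p.+2 = (i == p.+1) || (i == p.+3).
Proof. rewrite /g2 /U'_edge0; lia. Qed.
Lemma nb2u2 i : g2 i p.+3 = (i == p.+1) || (i == p.+2).
Proof. rewrite /g2 /U'_edge0; lia. Qed.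

Lemma R2 (v : 'rV[R]_(p + 4)) b : v *m adjmx R (compl (U'_graph p)) = b *: v ->
  v != 0 -> b != -1 -> b != 0 -> q2 b (p - 1)%:R = 0.
Proof.
move=> Hv hv0 hb1 hb0.
have E := eig_nat hG2 irr2 Hv.
set f := vat v in E.
set S := \sum_(0 <= i < p + 4) f i in E.
have hb1' : b + 1 != 0 by apply: contra hb1; rewrite addr_eq0.
have hN : forall j, (j <= p.+3)%N -> (j < p + 4)%N by move=> j hj; lia.
have h00 : (0 <= p.+3)%N by [].
have h11 : (1 <= p.+3)%N by [].
have hp1 : (p.+1 < p + 4)%N by lia.
have hp2 : (p.+2 < p + 4)%N by lia.
have hp3 : (p.+3 < p + 4)%N by lia.
have E0 := E 0%N (hN _ h00).
rewrite (eq_bigr (fun i => f i * (((1 <= i) && (i < p.+1))%N)%:R)) in E0; last first.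
  by move=> i _; rewrite nb20.
have h1p : (1 <= p.+1)%N by [].
have hp4 : (p.+1 <= p + 4)%N by lia.
rewrite (sum_rng f h1p hp4) in E0.
have h12 : (1 < p.+1)%N by lia.
rewrite (big_ltn h12) in E0.
set W := \sum_(2 <= i < p.+1) f i in E0.
set w := (S - f 0%N) / (b + 1).
have hw : forall j, (2 <= j <= p)%N -> f j = w.
  move=> j hj; have hjN : (j < p + 4)%N by lia.
  have := E j hjN.
  rewrite (nb1 f (hN _ h00) (fun i => nb2w i hj)).
  move=> Ej; rewrite /w -[f j](mulfK hb1'); congr (_ / _); lra.
have hW : W = (p - 1)%:R * w.
  have h2p : (2 <= p.+1)%N by lia.
  rewrite /W (@sum_const_cls _ f 2 p.+1 w h2p); last by move=> i hi; apply: hw; lia.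
  by rewrite subSS.
have hS : S = f 0%N + f 1%N + W + f p.+1 + f p.+2 + f p.+3 by rewrite /S S2.
have n01 : (0%N != p.+1) by [].
have E1 := E 1%N (hN _ h11).
rewrite (nb2 f (hN _ h00) hp1 n01 nb21) in E1.
have Et := E p.+1 hp1.
have n12 : (1%N != p.+2) by [].
have n13 : (1%N != p.+3) by [].
have n23 : (p.+2 != p.+3) by rewrite eqSS; apply/eqP; lia.
have n12' : (p.+1 != p.+2) by rewrite eqSS; apply/eqP; lia.
have n13' : (p.+1 != p.+3) by rewrite eqSS; apply/eqP; lia.
rewrite (nb3 f (hN _ h11) hp2 hp3 n12 n13 n23 nb2t) in Et.
have Eu1 := E p.+2 hp2.
rewrite (nb2 f hp1 hp3 n13' nb2u1) in Eu1.
have Eu2 := E p.+3 hp3.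
rewrite (nb2 f hp1 hp2 n12' nb2u2) in Eu2.
have hu : f p.+3 = f p.+2.
  apply: (mulfI hb0); lra.
have Ew : S - w * (b + 1) - f 0%N = 0 by rewrite /w mulfVK //; lra.
rewrite hu in hS Et Eu1 Eu2.
rewrite hW in hS E0.
rewrite hS in E0 E1 Et Eu1 Ew.
have e0 : (- b^+1) * (f 0%N) + 0 * (f 1%N) + 0 * w + (1) * (f p.+1) + (2) * (f p.+2) = 0 by lra.
have e1 : 0 * (f 0%N) + (- b^+1) * (f 1%N) + (((p-1)%:R)^+1) * w + 0 * (f p.+1) + (2) * (f p.+2) = 0 by lra.
have e2 : 0 * (f 0%N) + (1) * (f 1%N) + (- 1 + ((p-1)%:R)^+1 - b^+1) * w + (1) * (f p.+1) + (2) * (f p.+2) = 0 by lra.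
have e3 : (1) * (f 0%N) + 0 * (f 1%N) + (((p-1)%:R)^+1) * w + (- b^+1) * (f p.+1) + 0 * (f p.+2) = 0 by lra.
have e4 : (1) * (f 0%N) + (1) * (f 1%N) + (((p-1)%:R)^+1) * w + 0 * (f p.+1) + (- b^+1) * (f p.+2) = 0 by lra.
case: (eqVneq (q2 b (p - 1)%:R) 0) => // hq; exfalso.
have [z0 z1 zw zt zu] := alg2 e0 e1 e2 e3 e4 hq.
move/eqP: hv0; apply; apply/rowP => i; rewrite mxE -vatE -/f.
have : (i < p + 4)%N := ltn_ord i.
move: (nat_of_ord i) => j hj.
have [->|[->|[hj'|[->|[->|->]]]]] : j = 0%N \/ j = 1%N \/ (2 <= j <= p)%N \/ j = p.+1 \/ j = p.+2 \/ j = p.+3 by lia.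
- exact: z0.
- exact: z1.
- by rewrite hw.
- exact: zt.
- exact: zu.
- by rewrite hu.
Qed.

Lemma sum_ind1' N (h : nat -> R) a : (a < N)%N ->
  \sum_(0 <= i < N) (i == a)%:R * h i = h a.
Proof. by move=> ha; rewrite -(sum_ind1 h ha); apply: eq_bigr => i _; rewrite mulrC. Qed.

Lemma Em1 : eigenvalue (adjmx R (compl (U'_graph p))) (-1).
Proof.
set f := fun i : nat => (i == 2%N)%:R - (i == 3%N)%:R : R.
have h2 : (2 < p + 4)%N by lia.
have h3 : (3 < p + 4)%N by lia.
apply/eigenvalueP; exists (\row_(i < p + 4) f i).
  apply/rowP => j.
  rewrite (base hG2 irr2 (f := f)); last by move=> i; rewrite mxE.
  rewrite !mxE.
  have -> : \sum_(0 <= i < p + 4) f i = 0.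
    rewrite /f sumrB.
    rewrite (eq_bigr (fun i => (i == 2%N)%:R * (fun _ => 1) i)); last by move=> i _; rewrite mulr1.
    rewrite (sum_ind1' _ h2).
    rewrite (eq_bigr (fun i => (i == 3%N)%:R * (fun _ => 1) i)); last by move=> i _; rewrite mulr1.
    by rewrite (sum_ind1' _ h3) subrr.
  have -> : \sum_(0 <= i < p + 4) f i * (g2 i j)%:R = 0.
    rewrite /f (eq_bigr (fun i => (i == 2%N)%:R * (g2 i j)%:R - (i == 3%N)%:R * (g2 i j)%:R)); last first.
      by move=> i _; rewrite mulrBl.
    rewrite sumrB (sum_ind1' _ h2) (sum_ind1' _ h3).
    have -> : g2 2 j = g2 3 j by rewrite /g2 /U'_edge0; lia.
    by rewrite subrr.
  by rewrite sub0r subr0 mulN1r.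
apply/eqP => /rowP /(_ (Ordinal h2)); rewrite !mxE /f /=.
by move/eqP; rewrite subr0 oner_eq0.
Qed.

End G2.

Section G1.
Variable R : rcfType.
Variable p : nat.
Hypothesis hp : (3 <= p)%N.

Definition g1 (i j : nat) := U_edge0 p 3 i j || U_edge0 p 3 j i.
Lemma hG1 : forall i j : 'I_(p + 3 + 2), U_graph p 3 i j = g1 i j.
Proof. by []. Qed.
Lemma irr1 i : g1 i i = false.
Proof. rewrite /g1 /U_edge0; lia. Qed.

Lemma S1 (f : nat -> R) : \sum_(0 <= i < p + 3 + 2) f i =
  f 0%N + f 1%N + \sum_(2 <= i < p.+1) f i + f p.+1 + f p.+2 + f p.+3 + f p.+4.
Proof.
rewrite (big_cat_nat (n := 2)) //; last lia.
rewrite (big_cat_nat (n := p.+1) (m := 2)) //; try lia.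
rewrite [\sum_(0 <= i < 2) _]big_ltn // [\sum_(1 <= i < 2) _]big_ltn // big_geq //.
rewrite [\sum_(p.+1 <= i < p + 3 + 2) _]big_ltn; last lia.
rewrite [\sum_(p.+2 <= i < p + 3 + 2) _]big_ltn; last lia.
rewrite [\sum_(p.+3 <= i < p + 3 + 2) _]big_ltn; last lia.
rewrite [\sum_(p.+4 <= i < p + 3 + 2) _]big_ltn; last lia.
rewrite [\sum_(p.+4.+1 <= i < p + 3 + 2) _]big_geq; last lia.
rewrite /=; ring.
Qed.

Lemma nb10 i : g1 i 0 = ((1 <= i) && (i < p.+1))%N.
Proof. rewrite /g1 /U_edge0; lia. Qed.
Lemma nb11 i : g1 i 1 = (i == 0%N) || (i == p.+4).
Proof. rewrite /g1 /U_edge0; lia. Qed.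
Lemma nb1w j i : (2 <= j <= p)%N -> g1 i j = (i == 0%N).
Proof.
move=> /andP [h2 hp'].
have n0 : (j == 0%N) = false by apply/negbTE; rewrite -lt0n (leq_trans _ h2).
have n1 : (j == 1%N) = false by apply/negbTE; rewrite neq_ltn h2 orbT.
have n2 : (j == p.+1) = false by apply/negbTE; rewrite neq_ltn ltnS hp'.
have n3 : (j == p.+2) = false by apply/negbTE; rewrite neq_ltn ltnS (leqW hp').
have n4 : (j == p + 3 + 1)%N = false.
  by apply/negbTE; rewrite neq_ltn addn1 ltnS (leq_trans hp' (leq_addr 3 p)).
have n5 : (1 <= j <= p)%N by rewrite hp' (leq_trans _ h2).
have n6 : (p.+2 <= j)%N = false by apply/negbTE; rewrite -ltnNge ltnS (leqW hp').
have n7 : (j == p.+3) = false by apply/negbTE; rewrite neq_ltn ltnS (leqW (leqW hp')).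
rewrite /g1 /U_edge0 n0 n1 n2 n3 n4 n5 n6 n7 /=.
by rewrite !andbF !orbF andbT.
Qed.
Lemma nb1c i : g1 i p.+1 = [|| i == p.+2, i == p.+3 | i == p.+4].
Proof. rewrite /g1 /U_edge0; lia. Qed.
Lemma nb1u1 i : g1 i p.+2 = (i == p.+1) || (i == p.+3).
Proof. rewrite /g1 /U_edge0; lia. Qed.
Lemma nb1u2 i : g1 i p.+3 = (i == p.+1) || (i == p.+2).
Proof. rewrite /g1 /U_edge0; lia. Qed.
Lemma nb1z i : g1 i p.+4 = (i == 1%N) || (i == p.+1).
Proof. rewrite /g1 /U_edge0; lia. Qed.

Lemma R1 x k : k = (p - 1)%:R -> q1 x k = 0 -> A2 x k != 0 ->
  eigenvalue (adjmx R (compl (U_graph p 3))) x.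
Proof.
move=> hk hq hA.
pose f := fun i : nat => if i == 0%N then A0 x k else if i == 1%N then A1 x k
  else if (i <= p)%N then A2 x k else if i == p.+1 then A3 x k
  else if (i <= p.+3)%N then A4 x k else A5 x k.
have f0 : f 0%N = A0 x k by [].
have f1 : f 1%N = A1 x k by [].
have fw : forall i, (2 <= i <= p)%N -> f i = A2 x k.
  move=> i hi; rewrite /f; repeat (case: ifP; intro); try (exfalso; lia); done.
have fc : f p.+1 = A3 x k.
  rewrite /f; repeat (case: ifP; intro); try (exfalso; lia); done.
have fu1 : f p.+2 = A4 x k.
  rewrite /f; repeat (case: ifP; intro); try (exfalso; lia); done.
have fu2 : f p.+3 = A4 x k.
  rewrite /f; repeat (case: ifP; intro); try (exfalso; lia); done.
have fz : f p.+4 = A5 x k.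
  rewrite /f; repeat (case: ifP; intro); try (exfalso; lia); done.
have hS : \sum_(0 <= i < p + 3 + 2) f i =
    A0 x k + A1 x k + k * A2 x k + A3 x k + 2 * A4 x k + A5 x k.
  rewrite S1 f0 f1 fc fu1 fu2 fz.
  have h2p : (2 <= p.+1)%N by lia.
  rewrite (@sum_const_cls _ f 2 p.+1 (A2 x k) h2p); last by move=> i hi; apply: fw; lia.
  rewrite subSS -hk; ring.
have hN0 : (0 < p + 3 + 2)%N by lia.
have hN1 : (1 < p + 3 + 2)%N by lia.
have hNc : (p.+1 < p + 3 + 2)%N by lia.
have hNu1 : (p.+2 < p + 3 + 2)%N by lia.
have hNu2 : (p.+3 < p + 3 + 2)%N by lia.
have hNz : (p.+4 < p + 3 + 2)%N by lia.
have nab : forall a b : nat, a <> b -> a != b by move=> a b /eqP.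
apply/eigenvalueP; exists (\row_(i < p + 3 + 2) f i); last first.
  have h2 : (2 < p + 3 + 2)%N by lia.
  apply/eqP => /rowP /(_ (Ordinal h2)); rewrite !mxE /= => e.
  by move/eqP: hA; apply; rewrite -e fw //; lia.
apply/rowP => j.
rewrite (base hG1 irr1 (f := f)); last by move=> i; rewrite mxE.
rewrite !mxE hS.
have : (j < p + 3 + 2)%N := ltn_ord j.
move: (nat_of_ord j) => i hi.
have [->|[->|[hi'|[->|[->|[->|->]]]]]] : i = 0%N \/ i = 1%N \/ (2 <= i <= p)%N \/
   i = p.+1 \/ i = p.+2 \/ i = p.+3 \/ i = p.+4 by lia.
- rewrite (eq_bigr (fun i => f i * (((1 <= i) && (i < p.+1))%N)%:R)); last first.
    by move=> i' _; rewrite nb10.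
  have h1p : (1 <= p.+1)%N by [].
  have hp4 : (p.+1 <= p + 3 + 2)%N by lia.
  rewrite (sum_rng f h1p hp4).
  have h12 : (1 < p.+1)%N by lia.
  rewrite (big_ltn h12).
  have h2p : (2 <= p.+1)%N by lia.
  rewrite (@sum_const_cls _ f 2 p.+1 (A2 x k) h2p); last by move=> i' hi''; apply: fw; lia.
  rewrite subSS -hk f0 f1.
  rewrite -[RHS]addr0 -hq /q1 /A0 /A1 /A2 /A3 /A4 /A5; ring.
- rewrite (nb2 f hN0 hNz (nab 0%N p.+4 ltac:(lia)) nb11) f0 f1 fz.
  rewrite /A0 /A1 /A2 /A3 /A4 /A5; ring.
- rewrite (nb1 f hN0 (fun i' => nb1w i' hi')) f0 fw //.
  rewrite /A0 /A1 /A2 /A3 /A4 /A5; ring.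
- rewrite (nb3 f hNu1 hNu2 hNz (nab p.+2 p.+3 ltac:(lia)) (nab p.+2 p.+4 ltac:(lia)) (nab p.+3 p.+4 ltac:(lia)) nb1c).
  rewrite fc fu1 fu2 fz /A0 /A1 /A2 /A3 /A4 /A5; ring.
- rewrite (nb2 f hNc hNu2 (nab p.+1 p.+3 ltac:(lia)) nb1u1) fc fu1 fu2.
  rewrite /A0 /A1 /A2 /A3 /A4 /A5; ring.
- rewrite (nb2 f hNc hNu1 (nab p.+1 p.+2 ltac:(lia)) nb1u2) fc fu1 fu2.
  rewrite /A0 /A1 /A2 /A3 /A4 /A5; ring.
- rewrite (nb2 f hN1 hNc (nab 1%N p.+1 ltac:(lia)) nb1z) fc f1 fz.
  rewrite /A0 /A1 /A2 /A3 /A4 /A5; ring.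
Qed.

End G1.

Section P.
Variable R : rcfType.

Lemma P1 (x K : R) : x <= -5 -> 0 <= K -> 0 < q1 x K.
Proof.
move=> hx hK; set y := -5 - x.
have hy : 0 <= y by rewrite /y; lra.
have -> : x = -5 - y by rewrite /y; ring.
have -> : q1 (-5 - y) K = (8540 + 12123*y^+1 + 6973*y^+2 + 2083*y^+3 + 341*y^+4 + 29*y^+5 + y^+6)
  + K * (393 + 809*y^+1 + 526*y^+2 + 151*y^+3 + 20*y^+4 + y^+5) by rewrite /q1; ring.
have h1 : 0 < (8540 + 12123*y^+1 + 6973*y^+2 + 2083*y^+3 + 341*y^+4 + 29*y^+5 + y^+6).
  have := exprn_ge0 2 hy; have := exprn_ge0 3 hy; have := exprn_ge0 4 hy;
  have := exprn_ge0 5 hy; have := exprn_ge0 6 hy; lra.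
have h2 : 0 <= (393 + 809*y^+1 + 526*y^+2 + 151*y^+3 + 20*y^+4 + y^+5).
  have := exprn_ge0 2 hy; have := exprn_ge0 3 hy; have := exprn_ge0 4 hy;
  have := exprn_ge0 5 hy; lra.
have := mulr_ge0 hK h2; lra.
Qed.

Lemma P2 (K : R) : 7 <= K -> q1 (-3) K < 0.
Proof. move=> hK; rewrite /q1; lra. Qed.

Lemma P4 (x K : R) : x <= -3 -> 0 < A2 x K.
Proof.
move=> hx; set y := -3 - x.
have hy : 0 <= y by rewrite /y; lra.
have -> : x = -3 - y by rewrite /y; ring.
have -> : A2 (-3 - y) K = (38 + 63*y^+1 + 29*y^+2 + 4*y^+3) by rewrite /A2; ring.
have := exprn_ge0 2 hy; have := exprn_ge0 3 hy; lra.
Qed.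

Lemma P3 (x K : R) : x <= -3 -> 0 < K -> q2 x K = 0 -> q1 x (K - 1) < 0.
Proof.
move=> hx hK hq.
set y := -3 - x.
have hy : 0 <= y by rewrite /y; lra.
have ex : x = -3 - y by rewrite /y; ring.
have h20 : 0 < (- 2 - 2*x^+1 + 5*x^+2 + 5*x^+3 - x^+4 - x^+5).
  rewrite ex.
  have -> : (- 2 - 2*(-3 - y)^+1 + 5*(-3 - y)^+2 + 5*(-3 - y)^+3 - (-3 - y)^+4 - (-3 - y)^+5) =
    (76 + 194*y^+1 + 176*y^+2 + 73*y^+3 + 14*y^+4 + y^+5) by ring.
  have := exprn_ge0 2 hy; have := exprn_ge0 3 hy; have := exprn_ge0 4 hy;
  have := exprn_ge0 5 hy; lra.
have hR : 0 < (- 14*x^+2 + 43*x^+3 + 12*x^+4 - 53*x^+5 - 20*x^+6 + 5*x^+7 + 2*x^+8).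
  rewrite ex.
  have -> : (- 14*(-3 - y)^+2 + 43*(-3 - y)^+3 + 12*(-3 - y)^+4 - 53*(-3 - y)^+5 - 20*(-3 - y)^+6 + 5*(-3 - y)^+7 + 2*(-3 - y)^+8) =
    (171 + 1833*y^+1 + 5566*y^+2 + 7112*y^+3 + 4722*y^+4 + 1772*y^+5 + 379*y^+6 + 43*y^+7 + 2*y^+8) by ring.
  have := exprn_ge0 2 hy; have := exprn_ge0 3 hy; have := exprn_ge0 4 hy;
  have := exprn_ge0 5 hy; have := exprn_ge0 6 hy; have := exprn_ge0 7 hy;
  have := exprn_ge0 8 hy; lra.
set Q21 := (2 - 5*x^+1 - x^+2 + 4*x^+3 + x^+4).
have hq' : q2 x K = (- 2 - 2*x^+1 + 5*x^+2 + 5*x^+3 - x^+4 - x^+5) + K * Q21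
  by rewrite /q2 /Q21; ring.
have hQ21 : Q21 < 0.
  have hKQ : K * Q21 < 0 by move: hq; rewrite hq'; lra.
  by move: hKQ; rewrite pmulr_rlt0.
have hid : Q21 * q1 x (K - 1) =
   (- 14*x^+2 + 43*x^+3 + 12*x^+4 - 53*x^+5 - 20*x^+6 + 5*x^+7 + 2*x^+8)
   + (- 2 + x^+1 + 11*x^+2 - x^+3 - 5*x^+4 - x^+5) * q2 x K
  by rewrite /q1 /q2 /Q21; ring.
rewrite hq mulr0 addr0 in hid.
have hp : 0 < Q21 * q1 x (K - 1) by rewrite hid.
by move: hp; rewrite nmulr_rgt0.
Qed.

End P.

Theorem lemma2p1 (R : rcfType) (n : nat) (hn : (13 <= n)%N) :
  exists l1 l2 : R,
    [/\ is_lambda_min (adjmx R (compl (U_graph (n - 5)%N 3))) l1,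
        is_lambda_min (adjmx R (compl (U'_graph (n - 4)%N))) l2
      & l1 < l2].
Proof.
have hp1 : (3 <= n - 5)%N by lia.
have hp2 : (3 <= n - 4)%N by lia.
set K1 : R := (n - 5 - 1)%:R.
set K2 : R := (n - 4 - 1)%:R.
have hK : K2 = K1 + 1.
  rewrite /K2 /K1 (_ : (n - 4 - 1 = (n - 5 - 1) + 1)%N); last lia.
  by rewrite natrD.
have hK1 : 7 <= K1.
  have : (7%:R : R) <= K1 by rewrite /K1 ler_nat; lia.
  done.
have hK2 : 0 < K2 by rewrite hK; lra.
have [l2 hl2] := least_eig (Em1 R hp2).
have [c [hcl2 hc3 hqc]] : exists c : R, [/\ c <= l2, c <= -3 & q1 c K1 < 0].
  case: (lerP (-3) l2) => h.
    by exists (-3); split; [exact: h | lra | exact: P2].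
  exists l2; split => //; first exact: ltW.
  have [v Hv hv0] := eigenvalueP (proj1 hl2).
  have hn1 : l2 != -1 by apply/eqP => e; move: h; rewrite e; lra.
  have hn0 : l2 != 0 by apply/eqP => e; move: h; rewrite e; lra.
  have hq2 := R2 hp2 Hv hv0 hn1 hn0.
  have := P3 (ltW h) hK2 hq2.
  by rewrite hK addrK.
have hc5 : -5 <= c.
  rewrite leNgt; apply/negP => hlt.
  have hK0 : 0 <= K1 by lra.
  have := P1 (ltW hlt) hK0; lra.
have hK0 : 0 <= K1 by lra.
have hq5 := P1 (lexx (-5 : R)) hK0.
have hiv : (- Q1poly K1).[-5] <= 0 <= (- Q1poly K1).[c].
  by rewrite !hornerN !Q1polyE; apply/andP; split; lra.
have [e /andP [he1 he2] hroot] := @poly_ivt R (- Q1poly K1) (-5) c hc5 hiv.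
move: hroot; rewrite /root hornerN Q1polyE oppr_eq0 => /eqP hqe.
have hec : e < c.
  rewrite lt_neqAle he2 andbT; apply/eqP => ec; move: hqc; rewrite -ec hqe; lra.
have hA : A2 e K1 != 0.
  by have := P4 K1 (ltW (lt_le_trans hec hc3)); rewrite lt0r => /andP [].
have he := R1 hp1 (erefl K1) hqe hA.
have [l1 hl1] := least_eig he.
exists l1, l2; split => //.
have := proj2 hl1 e he.
have := proj2 hl2 l2 (proj1 hl2).
lra.
Qed.
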